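(* Let $R$ be a principal ideal domain and let $a\in R$ be a nonzero non-unit. Then the left ideal $Ra$ is structurally prime if and only if $a$ is left totally unbounded or $a$ is a factor of an Inv-atom.
   Context: A principal ideal domain (PID) is a (not necessarily commutative) domain in which every left ideal and every right ideal is principal. A left ideal $\mathfrak{p}$ is structurally prime if $\mathfrak{p}\neq R$ and, for left ideals $A,B$, $AB\subseteq\mathfrak{p}$ implies $A\subseteq\mathfrak{p}$ or $B\subseteq\mathfrak{p}$. A nonzero $c$ is invariant if $Rc=cR$. An Inv-atom is an invariant non-unit $p$ such that $p=bc$ with $b,c$ invariant implies $b$ or $c$ is a unit. $a$ is a factor of $p$ if $p=ras$ for some $r,s\in R$; $a$ is a left factor of $b$ if $b\in aR$. An element $p$ is bounded if $Rp$ contains a nonzero two-sided ideal. A nonzero non-unit is left totally unbounded if it has no non-unit bounded left factors. *)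

(* Defs.v *)
From mathcomp Require Import all_boot all_algebra.
Set Implicit Arguments. Unset Strict Implicit. Unset Printing Implicit Defensive.
Import GRing.Theory.
Local Open Scope ring_scope.

Section Defs.
Variable R : nzRingType.

Definition is_unit (x : R) : Prop := exists y : R, x * y = 1 /\ y * x = 1.

(* no zero divisors (R is nontrivial since nzRingType) *)
Definition is_domain : Prop := forall x y : R, x * y = 0 -> x = 0 \/ y = 0.

Definition is_left_ideal (I : R -> Prop) : Prop :=
  [/\ I 0, (forall x y, I x -> I y -> I (x + y)),
      (forall x, I x -> I (- x)) & (forall r x, I x -> I (r * x))].

Definition is_right_ideal (I : R -> Prop) : Prop :=
  [/\ I 0, (forall x y, I x -> I y -> I (x + y)),
      (forall x, I x -> I (- x)) & (forall r x, I x -> I (x * r))].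

Definition is_twosided_ideal (I : R -> Prop) : Prop :=
  is_left_ideal I /\ (forall r x, I x -> I (x * r)).

Definition lmul_set (a : R) : R -> Prop := fun x => exists r : R, x = r * a.
Definition rmul_set (a : R) : R -> Prop := fun x => exists r : R, x = a * r.

Definition set_sub (A B : R -> Prop) : Prop := forall x, A x -> B x.
Definition set_eq (A B : R -> Prop) : Prop := forall x, A x <-> B x.

Definition is_PID : Prop :=
  [/\ is_domain,
      (forall I, is_left_ideal I -> exists a, set_eq I (lmul_set a))
    & (forall I, is_right_ideal I -> exists a, set_eq I (rmul_set a))].

Definition ideal_prod (A B : R -> Prop) : R -> Prop :=
  fun x => exists s : seq (R * R),
    (forall i, (i < size s)%N -> A (nth (0, 0) s i).1 /\ B (nth (0, 0) s i).2) /\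
    x = \sum_(p <- s) p.1 * p.2.

Definition structurally_prime (P : R -> Prop) : Prop :=
  (~ set_eq P (fun _ => True)) /\
  (forall A B, is_left_ideal A -> is_left_ideal B ->
     set_sub (ideal_prod A B) P -> set_sub A P \/ set_sub B P).

Definition invariant (c : R) : Prop := c <> 0 /\ set_eq (lmul_set c) (rmul_set c).

Definition inv_atom (p : R) : Prop :=
  [/\ invariant p, ~ is_unit p &
      forall b c, invariant b -> invariant c -> p = b * c -> is_unit b \/ is_unit c].

Definition is_factor (a p : R) : Prop := exists r s : R, p = r * a * s.

Definition left_factor (a b : R) : Prop := rmul_set a b.

Definition bounded (p : R) : Prop :=
  exists I, [/\ is_twosided_ideal I, (exists x, I x /\ x <> 0) & set_sub I (lmul_set p)].

Definition left_totally_unbounded (a : R) : Prop :=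
  [/\ a <> 0, ~ is_unit a &
      forall b, left_factor b a -> ~ is_unit b -> ~ bounded b].

End Defs.

(* Main.v *)
Require Import Defs.
From mathcomp Require Import all_boot all_algebra.
From Stdlib Require Import Classical.
Set Implicit Arguments. Unset Strict Implicit.
Import GRing.Theory.
Local Open Scope ring_scope.

Lemma cancel_r (R : nzRingType) (HD : is_domain R) (x y z : R) :
  x <> 0 -> y * x = z * x -> y = z.
Proof.
move=> x0 e; have : (y - z) * x = 0 by rewrite mulrBl e subrr.
case/HD => // /eqP; rewrite subr_eq0 => /eqP //.
Qed.

Lemma cancel_l (R : nzRingType) (HD : is_domain R) (x y z : R) :
  x <> 0 -> x * y = x * z -> y = z.
Proof.
move=> x0 e; have : x * (y - z) = 0 by rewrite mulrBr e subrr.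
case/HD => // /eqP; rewrite subr_eq0 => /eqP //.
Qed.

Lemma onesided (R : nzRingType) (HD : is_domain R) (x y : R) :
  x * y = 1 -> y * x = 1.
Proof.
move=> e; have : (y * x - 1) * y = 0.
  by rewrite mulrBl -mulrA e mulr1 mul1r subrr.
case/HD => [/eqP|y0]; first by rewrite subr_eq0 => /eqP.
by move: e; rewrite y0 mulr0 => /esym/eqP; rewrite oner_eq0.
Qed.

Lemma unit_l (R : nzRingType) (HD : is_domain R) (x y : R) :
  x * y = 1 -> is_unit x.
Proof. move=> e; exists y; split => //; exact: onesided. Qed.

Lemma unit_r (R : nzRingType) (HD : is_domain R) (x y : R) :
  x * y = 1 -> is_unit y.
Proof. move=> e; exists x; split => //; exact: onesided. Qed.

Lemma lideal_lmul (R : nzRingType) (a : R) : is_left_ideal (lmul_set a).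
Proof.
split.
- by exists 0; rewrite mul0r.
- by move=> x y [r1 ->] [r2 ->]; exists (r1 + r2); rewrite mulrDl.
- by move=> x [r1 ->]; exists (- r1); rewrite mulNr.
- by move=> r x [r1 ->]; exists (r * r1); rewrite mulrA.
Qed.

Lemma sum_in (R : nzRingType) (I : R -> Prop) (HI : is_left_ideal I)
  (s : seq (R * R)) :
  (forall i, (i < size s)%N -> I ((nth (0, 0) s i).1 * (nth (0, 0) s i).2)) ->
  I (\sum_(p <- s) p.1 * p.2).
Proof.
case: HI => I0 Iadd _ _.
elim: s => [|p s IH] H; first by rewrite big_nil.
rewrite big_cons; apply: Iadd; first exact: (H 0%N).
by apply: IH => i Hi; apply: (H i.+1).
Qed.

Lemma SP_elem (R : nzRingType) (a : R) : structurally_prime (lmul_set a) ->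
  forall b c, (forall r, lmul_set a (b * r * c)) -> lmul_set a b \/ lmul_set a c.
Proof.
move=> [_ SP] b c H.
have := SP (lmul_set b) (lmul_set c) (lideal_lmul b) (lideal_lmul c).
case.
- move=> x [s [Hs ->]]; apply: sum_in; first exact: lideal_lmul.
  move=> i Hi; have [[u ->] [v ->]] := Hs i Hi.
  have [t Ht] := H v; exists (u * t).
  by rewrite -mulrA (mulrA b) Ht mulrA.
- by move=> S; left; apply: S; exists 1; rewrite mul1r.
- by move=> S; right; apply: S; exists 1; rewrite mul1r.
Qed.

Lemma elem_SP (R : nzRingType) (a : R) : ~ lmul_set a 1 ->
  (forall b c, (forall r, lmul_set a (b * r * c)) -> lmul_set a b \/ lmul_set a c) ->
  structurally_prime (lmul_set a).
Proof.
move=> n1 E; split; first by move=> H; apply: n1; apply: (H 1).2.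
move=> A B HA HB H.
apply: NNPP => /not_or_and [nA nB].
have [b Hb] := not_all_ex_not _ _ nA.
have [c Hc] := not_all_ex_not _ _ nB.
have [Ab nb] := imply_to_and _ _ Hb.
have [Bc nc] := imply_to_and _ _ Hc.
suff : lmul_set a b \/ lmul_set a c by case.
apply: E => r.
apply: H; exists [:: (b, r * c)]; split.
- case => //= _; split => //; by case: HB => _ _ _; apply.
- by rewrite big_seq1 /= mulrA.
Qed.

Lemma twosided_inv (R : nzRingType) (HR : is_PID R) (I : R -> Prop) :
  is_twosided_ideal I -> (exists x, I x /\ x <> 0) ->
  exists q, Defs.invariant q /\ set_eq I (lmul_set q).
Proof.
case: HR => HD HL HRr [[I0 Iadd Ineg Ilm] Irm] [x0 [Ix0 x00]].
have [c Ec] := HL I (And4 I0 Iadd Ineg Ilm).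
have [d Ed] := HRr I (And4 I0 Iadd Ineg Irm).
have c0 : c <> 0.
  by move=> c0; apply: x00; have [r ->] := (Ec x0).1 Ix0; rewrite c0 mulr0.
have Ic : I c by apply/Ec; exists 1; rewrite mul1r.
have Id : I d by apply/Ed; exists 1; rewrite mulr1.
have [u cu] := (Ed c).1 Ic.
have [v dv] := (Ec d).1 Id.
have [w cw] := (Ec (c * u)).1 (Irm u c Ic).
have vw : v * w = 1.
  apply: (cancel_r HD c0); rewrite mul1r -mulrA -cw mulrA -dv -cu //.
have wv := onesided HD vw.
exists c; split => //; split => //.
move=> z; split.
- move=> [y ->].
  have [z' Hz'] := (Ed (v * y * c)).1 (Ilm (v * y) c Ic).
  exists z'.
  have e : w * (v * y * c) = w * (d * z') by rewrite Hz'.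
  by move: e; rewrite dv !mulrA wv !mul1r.
- move=> [t ->]; apply/Ec; exact: Irm.
Qed.

Lemma Jideal (R : nzRingType) (a c : R) :
  is_twosided_ideal (fun z => forall r, lmul_set a (z * r * c)).
Proof.
split; [split|].
- by move=> r; exists 0; rewrite !mul0r.
- move=> z1 z2 h1 h2 r; have [r1 e1] := h1 r; have [r2 e2] := h2 r.
  by exists (r1 + r2); rewrite !mulrDl e1 e2.
- move=> z h r; have [r1 e1] := h r.
  by exists (- r1); rewrite !mulNr e1.
- move=> s z h r; have [r1 e1] := h r.
  by exists (s * r1); rewrite -(mulrA s) -(mulrA s) e1 mulrA.
- by move=> s z h r; rewrite -(mulrA z); exact: h.
Qed.

Lemma Kideal (R : nzRingType) (a : R) :
  is_twosided_ideal (fun z => forall r, lmul_set a (z * r)).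
Proof.
split; [split|].
- by move=> r; exists 0; rewrite !mul0r.
- move=> z1 z2 h1 h2 r; have [r1 e1] := h1 r; have [r2 e2] := h2 r.
  by exists (r1 + r2); rewrite !mulrDl e1 e2.
- move=> z h r; have [r1 e1] := h r.
  by exists (- r1); rewrite !mulNr e1.
- move=> s z h r; have [r1 e1] := h r.
  by exists (s * r1); rewrite -(mulrA s) e1 mulrA.
- by move=> s z h r; rewrite -(mulrA z); exact: h.
Qed.

Theorem proposition3p13 (R : nzRingType) (HR : is_PID R) (a : R)
  (Ha0 : a <> 0) (Hau : ~ is_unit a) :
  structurally_prime (lmul_set a) <->
  (left_totally_unbounded a \/ exists p : R, inv_atom p /\ is_factor a p).
Proof.
case: (HR) => HD HLp _.
have n1 : ~ lmul_set a 1.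
  by move=> [r e]; apply: Hau; apply: (unit_r HD (x := r)); rewrite -e.
split.
- move=> SP; have E := SP_elem SP.
  case: (classic (exists p, inv_atom p /\ is_factor a p)) => [h|h]; [by right|left].
  split => // y [x Hax] Hyu [I [HI [w [Iw w0]] Isub]].
  apply: h.
  case: (HI) => [[I0 Iadd Ineg Ilm] Irm].
  have x0 : x <> 0 by move=> x0; apply: Ha0; rewrite Hax x0 mulr0.
  have IRa : forall z, I z -> lmul_set a z.
    move=> z Iz; case: (E z x) => // [r|[t ht]].
    + have [t ht] := Isub _ (Irm r z Iz).
      by exists t; rewrite ht -mulrA -Hax.
    + exfalso; apply: Hyu; apply: (unit_r HD (x := t)).
      apply: (cancel_r HD x0).
      by rewrite mul1r -mulrA -Hax; exact/esym.
  set K := fun z => forall r, lmul_set a (z * r).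
  have HK : is_twosided_ideal K := Kideal a.
  have [q [Hq EK]] := twosided_inv HR HK
    (ex_intro _ w (conj (fun r => IRa _ (Irm r w Iw)) w0)).
  have K1 : forall z, K z -> lmul_set a z.
    by move=> z h; have := h 1; rewrite mulr1.
  have Kq : K q by apply/EK; exists 1; rewrite mul1r.
  have Kinv : forall z, Defs.invariant z -> lmul_set a z -> K z.
    move=> z [_ Ez] [t ht] r.
    have [u hu] := (Ez (z * r)).2 (ex_intro _ r erefl).
    by exists (u * t); rewrite hu ht mulrA.
  exists q; split; last first.
    by have [r hr] := K1 q Kq; exists r, 1; rewrite mulr1.
  split => //.
  + move=> [q' [e1 e2]]; apply: n1; have := Kq q'; by rewrite e1.
  + move=> b c Hb Hc e.
    case: (E b c).
    * move=> r.
      have [t ht] := (Hc.2 (r * c)).1 (ex_intro _ r erefl).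
      by rewrite -mulrA ht mulrA -e; exact: Kq t.
    * move=> hb; have Kb := Kinv b Hb hb.
      have [t ht] := (EK b).1 Kb; rewrite e in ht.
      have [t' ht'] := (Hb.2 (t * b)).1 (ex_intro _ t erefl).
      right; apply: (unit_r HD (x := t')).
      apply: (cancel_l HD Hb.1).
      by rewrite mulr1 mulrA -ht' -mulrA -ht.
    * move=> hc; have Kc := Kinv c Hc hc.
      have [t ht] := (EK c).1 Kc; rewrite e in ht.
      left; apply: (unit_r HD (x := t)).
      apply: (cancel_r HD Hc.1).
      by rewrite mul1r -mulrA -ht.
- case => [[_ _ LTU] | [p [[Hp Hpu Hpa] [r [s Hprs]]]]];
    apply: elem_SP => // b c H; case: (classic (lmul_set a c)) => hc;
    [by right | left | by right | left].
  + apply: NNPP => hb.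
    set L := fun z => exists u v, z = u * a + v * c.
    have HL : is_left_ideal L.
      split.
      * by exists 0, 0; rewrite !mul0r addr0.
      * move=> z1 z2 [u1 [v1 ->]] [u2 [v2 ->]]; exists (u1 + u2), (v1 + v2).
        by rewrite !mulrDl addrACA.
      * by move=> z [u [v ->]]; exists (- u), (- v); rewrite !mulNr opprD.
      * by move=> t z [u [v ->]]; exists (t * u), (t * v); rewrite mulrDr !mulrA.
    have [x Ex] := HLp L HL.
    have La : L a by exists 1, 0; rewrite mul1r mul0r addr0.
    have Lc : L c by exists 0, 1; rewrite mul1r mul0r add0r.
    have Lx : L x by apply/Ex; exists 1; rewrite mul1r.
    have [y Hy] := (Ex a).1 La.
    have [t Ht] := (Ex c).1 Lc.
    have [u [v Hx]] := Lx.
    have x0 : x <> 0 by move=> x0; apply: Ha0; rewrite Hy x0 mulr0.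
    apply: (LTU y).
    * by exists x.
    * move=> [y' [e1 e2]]; apply: hc; exists (t * y').
      by rewrite Ht Hy mulrA -(mulrA t) e2 mulr1.
    * exists (fun z => forall r, lmul_set a (z * r * c)); split.
      -- exact: Jideal.
      -- exists b; split => // b0; apply: hb; exists 0; by rewrite b0 mul0r.
      -- move=> z Jz; have [s' hs] := Jz v.
         exists (z * u + s'); apply: (cancel_r HD x0).
         rewrite -(mulrA _ y) -Hy mulrDl -hs.
         by rewrite {1}Hx mulrDr !mulrA.
  + have s0 : s <> 0 by move=> s0; apply: Hp.1; rewrite Hprs s0 mulr0.
    have pRa : forall x, lmul_set a (p * x).
      move=> x.
      have [y hy] := (Hp.2 (p * x)).2 (ex_intro _ x erefl).
      have [w hw] := (Hp.2 (p * s)).2 (ex_intro _ s erefl).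
      exists (y * w * r); apply: (cancel_r HD s0).
      by rewrite hy -(mulrA y) hw Hprs !mulrA.
    set J := fun z => forall t, lmul_set a (z * t * c).
    have HJ : is_twosided_ideal J := Jideal a c.
    have Jp : J p by move=> t; rewrite -mulrA; exact: pRa.
    have [q [Hq EJ]] := twosided_inv HR HJ (ex_intro _ p (conj Jp Hp.1)).
    have Jq : J q by apply/EJ; exists 1; rewrite mul1r.
    have qnu : ~ is_unit q.
      move=> [q' [e1 _]]; apply: hc.
      have J1 : J 1 by rewrite -e1; apply: HJ.2.
      by have := J1 1; rewrite !mul1r.
    have [t ht] := (EJ p).1 Jp.
    have Ht : Defs.invariant t.
      split; first by move=> t0; apply: Hp.1; rewrite ht t0 mul0r.
      move=> z; split.
      * move=> [u ->].
        have [v hv] := (Hp.2 (u * p)).1 (ex_intro _ u erefl).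
        have [v' hv'] := (Hq.2 (q * v)).2 (ex_intro _ v erefl).
        exists v'; apply: (cancel_r HD Hq.1).
        by rewrite -(mulrA u) -ht hv ht -(mulrA t) hv' mulrA.
      * move=> [u ->].
        have [u' hu'] := (Hq.2 (u * q)).1 (ex_intro _ u erefl).
        have [v hv] := (Hp.2 (p * u')).2 (ex_intro _ u' erefl).
        exists v; apply: (cancel_r HD Hq.1).
        by rewrite -(mulrA t) hu' mulrA -ht hv ht mulrA.
    case: (Hpa t q Ht Hq ht) => [[t' [e1 e2]] | //].
    have [u hu] := (EJ b).1 H.
    have [r' hr'] := pRa 1; rewrite mulr1 in hr'.
    exists (u * t' * r').
    by rewrite hu -mulrA -hr' ht mulrA -(mulrA u) e2 mulr1.
Qed.
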